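(* Let $A$ be a non-empty set and $\theta\subseteq\mathbb{M}_A^2$ a congruence on the free magma $\mathbb{M}_A$. The following are equivalent: (1) $\mathbb{M}_A/\theta$ is equidecomposable; (2) $\theta$ is closed; (3) $\mathcal{G}(\theta)\subseteq (A\times\mathbb{M}_A)\cup(\mathbb{M}_A\times A)$.
   Context: $\mathbb{M}_A$ is the free magma on $A$ (non-associative words over $A$ with $x+y=(x,y)$). $\mathbb{M}_A^2$ has the componentwise operation. A congruence on a magma $M$ is an equivalence relation on $M$ that is a submagma of $M^2$. A magma is equidecomposable if $x+y=x'+y'$ implies $x=x'$ and $y=y'$. A subset $X$ of a magma is closed if $u+v\in X$ implies $u,v\in X$; here $\theta$ is closed as a subset of $\mathbb{M}_A^2$. For a submagma $S$ of $\mathbb{M}_A^2$, $\mathcal{G}(S)$ is the set of elements of $S$ that cannot be written as $u+v$ with $u,v\in S$ (its unique minimal generating set). *)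

(* Defs.v *)
(** The free magma M_A on A: non-associative words (binary trees with leaves in A);
    the operation is x + y = (x, y) = Node x y. *)
Inductive fmagma (A : Type) : Type :=
| Leaf : A -> fmagma A
| Node : fmagma A -> fmagma A -> fmagma A.
Arguments Leaf {A} _.
Arguments Node {A} _ _.

Definition pair_op {A : Type} (u v : fmagma A * fmagma A) : fmagma A * fmagma A :=
  (Node (fst u) (fst v), Node (snd u) (snd v)).

Definition rel2 (A : Type) := fmagma A * fmagma A -> Prop.

Definition submagma2 {A : Type} (S : rel2 A) : Prop :=
  forall u v, S u -> S v -> S (pair_op u v).

Definition congruence {A : Type} (theta : rel2 A) : Prop :=
  (forall x, theta (x, x)) /\
  (forall x y, theta (x, y) -> theta (y, x)) /\
  (forall x y z, theta (x, y) -> theta (y, z) -> theta (x, z)) /\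
  submagma2 theta.

(** Equidecomposability of the quotient magma M_A/theta, written out on
    representatives: the class operation is [x]+[y] = [x+y] and equality of
    classes is theta, so "[x]+[y] = [x']+[y'] implies [x]=[x'] and [y]=[y']"
    unfolds to the following. *)
Definition quotient_equidecomposable {A : Type} (theta : rel2 A) : Prop :=
  forall x y x' y', theta (Node x y, Node x' y') -> theta (x, x') /\ theta (y, y').

Definition closed2 {A : Type} (X : rel2 A) : Prop :=
  forall u v, X (pair_op u v) -> X u /\ X v.

Definition gens {A : Type} (S : rel2 A) : rel2 A :=
  fun p => S p /\ ~ (exists u v, S u /\ S v /\ p = pair_op u v).

Definition is_leaf {A : Type} (x : fmagma A) : Prop := exists a, x = Leaf a.

Definition leaf_pairs {A : Type} : rel2 A :=
  fun p => is_leaf (fst p) \/ is_leaf (snd p).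

(* Main.v *)
Require Import Defs.
From Stdlib Require Import Classical.

Theorem theorem6p4 (A : Type) (a0 : A) (theta : rel2 A) :
  congruence theta ->
  (quotient_equidecomposable theta <-> closed2 theta) /\
  (closed2 theta <-> (forall p, gens theta p -> leaf_pairs p)).
Proof.
  intros _. split; [split|split].
  - intros H [a b] [c d] Hp. unfold pair_op in Hp; simpl in Hp.
    exact (H _ _ _ _ Hp).
  - intros H x y x' y' Hp. exact (H (x, x') (y, y') Hp).
  - intros H [x y] [Hp Hn]. unfold leaf_pairs; simpl.
    destruct x as [a|x1 x2]; [left; exists a; reflexivity|].
    destruct y as [b|y1 y2]; [right; exists b; reflexivity|].
    exfalso. apply Hn. destruct (H (x1, y1) (x2, y2) Hp) as [H1 H2].
    exists (x1, y1), (x2, y2). auto.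
  - intros H [a b] [c d] Hp.
    destruct (classic (exists u v, theta u /\ theta v /\
                 pair_op (a, b) (c, d) = pair_op u v)) as [Hex|Hn].
    + destruct Hex as [[u1 u2] [[v1 v2] [Hu [Hv He]]]].
      unfold pair_op in He; simpl in He. injection He; intros; subst. auto.
    + destruct (H _ (conj Hp Hn)) as [[z Hz]|[z Hz]]; discriminate.
Qed.
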